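(* Let $\beta$ be an ordered partition of $N$ and $x\in X^\beta$. Then $\bar W_{[x]}=\bar W_{\beta(x)}$, where $\bar W_{[x]}=\{u\in\bar W: ux\bar W_\beta=x\bar W_\beta\}$ and $\bar W_{\beta(x)}$ is the subgroup of $\bar W$ generated by the reflections $s_{\alpha}$ with $\alpha\in\bar\Pi\cap x(\bar R_{\beta,+})$.
   Context: Fix $N\ge2$. $\bar P=\bigoplus_{i=1}^N\mathbb Z\epsilon_i$ with $(\epsilon_i,\epsilon_j)=\delta_{ij}$; $\bar R=\{\alpha_{ij}=\epsilon_i-\epsilon_j:i\ne j\}$, $\bar R_+=\{\alpha_{ij}:i<j\}$, $\alpha_i=\alpha_{i,i+1}$, $\bar\Pi=\{\alpha_1,\dots,\alpha_{N-1}\}$; $\bar P_-=\{\eta\in\bar P:(\eta,\alpha)\le0\ \forall\alpha\in\bar R_+\}$. $\bar W=\mathfrak S_N$ acts by permuting indices; $W=\bar W\ltimes\bar P$ with elements $wt_\eta$, $wt_\eta w^{-1}=t_{w(\eta)}$. Affine roots (with formal $\delta$): $R=\{\bar\alpha+k\delta:\bar\alpha\in\bar R,k\in\mathbb Z\}$, $R_+=\{\bar\alpha+k\delta:\bar\alpha\in\bar R_+,k\ge0\}\cup\{-\bar\alpha+k\delta:\bar\alpha\in\bar R_+,k>0\}$, $R_-=R\setminus R_+$; $W$ acts on $R$ by $w(\bar\alpha+k\delta)=w(\bar\alpha)+k\delta$, $t_\eta(\bar\alpha+k\delta)=\bar\alpha+(k-(\eta,\bar\alpha))\delta$ (so $\bar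 R\subset R$ and $x(\bar R_{\beta,+})\subset R$); $l(w)=\#(R_+\cap w^{-1}(R_-))$. An ordered partition $\beta$ of $N$ gives blocks of consecutive indices of sizes $\beta_1,\dots,\beta_r$; $\bar R_\beta=\{\alpha_{ij}:i,j\text{ in the same block}\}$, $\bar R_{\beta,+}=\bar R_\beta\cap\bar R_+$, $\bar W_\beta$ the subgroup generated by $s_{\alpha_i}$, $\alpha_i\in\bar R_\beta$; $W^\beta=\{w\in W:l(wu)\ge l(w)\ \forall u\in\bar W_\beta\}$, $\bar W^\beta=W^\beta\cap\bar W$. For $w\in\bar W^\beta$, $\eta_w\in\bar P_-$ is defined by $(\eta_w,\epsilon_1)=0$ and $(\eta_w,\alpha_i)=-1$ if $\alpha_i\in w(\bar R_+\setminus\bar R_{\beta,+})$, $0$ otherwise; $\bar P_-(w)=\{\eta+\eta_w:\eta\in\bar P_-\}$; $X^\beta=\{t_\eta w:w\in\bar W^\beta,\eta\in\bar P_-(w)\}$. *)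

(* Defs.v *)
From HB Require Import structures.
From mathcomp Require Import all_boot all_order all_algebra all_fingroup.
From mathcomp Require Import finmap boolp classical_sets cardinality.
Set Implicit Arguments. Unset Strict Implicit. Unset Printing Implicit Defensive.
Import GRing.Theory Num.Theory.
Local Open Scope ring_scope.

(* Indices 1..N of the paper are the ordinals 'I_N = {0,..,N-1}.           *)
(* Lattice bar P = Z^N : eta = sum_i eta i * eps_i.                         *)
Definition lat (N : nat) := {ffun 'I_N -> int}.

(* An element t_eta w of W = bar W |x bar P is the pair (eta, w).          *)
Definition Welt (N : nat) := (lat N * {perm 'I_N})%type.

(* w acts on bar P by w(eps_i) = eps_{w i}, so (w eta)_j = eta_{w^-1 j}.   *)
(* (t_eta w)(t_mu v) = t_{eta + w mu} (w o v).  Mathcomp's (v * w)%g is    *)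
(* "first v, then w", i.e. the composite w o v.                             *)
Definition wmul (N : nat) (x y : Welt N) : Welt N :=
  ([ffun j => x.1 j + y.1 (x.2^-1 j)%g], (y.2 * x.2)%g).

Definition emb (N : nat) (w : {perm 'I_N}) : Welt N := ([ffun _ => 0], w).

(* affine roots: (i, j, k) stands for alpha_ij + k delta, with i <> j *)
Definition aroot (N : nat) := ('I_N * 'I_N * int)%type.
Definition is_root (N : nat) (r : aroot N) : bool := r.1.1 != r.1.2.
Definition rpos (N : nat) (r : aroot N) : bool :=
  (((r.1.1 < r.1.2)%N && (0 <= r.2)) || ((r.1.2 < r.1.1)%N && (0 < r.2))).

(* (t_eta w)(alpha_ij + k delta) = alpha_{w i, w j} + (k - (eta, alpha_{w i, w j})) delta *)
Definition ract (N : nat) (x : Welt N) (r : aroot N) : aroot N :=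
  (x.2 r.1.1, x.2 r.1.2, r.2 - (x.1 (x.2 r.1.1) - x.1 (x.2 r.1.2))).

Definition inv_set (N : nat) (x : Welt N) : set (aroot N) :=
  fun r => is_root r /\ rpos r /\ ~~ rpos (ract x r).

(* l(x) = # (R_+ \cap x^{-1}(R_-))  (this set is finite) *)
Definition len (N : nat) (x : Welt N) : nat := #|` fset_set (inv_set x)|.

Definition ordered_partition (beta : seq nat) (N : nat) : bool :=
  all (fun b => (0 < b)%N) beta && (sumn beta == N).

Definition blk (beta : seq nat) (i : nat) : nat :=
  count (fun p => (p <= i)%N) (scanl addn 0%N beta).

(* bar W_beta, generated by s_{alpha_i} = tperm i (i+1) with alpha_i in bar R_beta *)
Definition Wbar_beta (N : nat) (beta : seq nat) : {set {perm 'I_N}} :=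
  <<[set s : {perm 'I_N} | [exists i : 'I_N, exists j : 'I_N,
      [&& (j == i.+1 :> nat), blk beta i == blk beta j & s == tperm i j]]]>>%g.

Definition in_Wbar_up (N : nat) (beta : seq nat) (w : {perm 'I_N}) : Prop :=
  forall u, u \in Wbar_beta N beta -> (len (emb w) <= len (emb (u * w)%g))%N.

(* alpha_i \in w(bar R_+ \ bar R_{beta,+}) *)
Definition eta_cond (N : nat) (beta : seq nat) (w : {perm 'I_N}) (i : 'I_N) : bool :=
  [exists a : 'I_N, exists b : 'I_N,
     [&& (a < b)%N, blk beta a != blk beta b, w a == i & (w b == i.+1 :> nat)]].

(* eta_w: (eta_w, eps_1) = 0 and (eta_w, alpha_i) = -1 if eta_cond i, 0 otherwise,
   i.e. eta_w(j) = #{ i < j | eta_cond i } *)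
Definition eta_w (N : nat) (beta : seq nat) (w : {perm 'I_N}) : lat N :=
  [ffun j : 'I_N => (#|[set i : 'I_N | (i < j)%N & eta_cond beta w i]|)%:Z].

(* bar P_- : (eta, alpha_ij) <= 0 for i < j *)
Definition Pminus (N : nat) (eta : lat N) : Prop :=
  forall i j : 'I_N, (i < j)%N -> eta i <= eta j.

(* X^beta = { t_eta w | w \in bar W^beta, eta \in bar P_-(w) } *)
Definition in_X (N : nat) (beta : seq nat) (x : Welt N) : Prop :=
  exists w : {perm 'I_N}, in_Wbar_up beta w /\
    exists eta : lat N, Pminus eta /\
      x = ([ffun j => eta j + eta_w beta w j], w).

Definition in_Wx (N : nat) (beta : seq nat) (x : Welt N) (u : {perm 'I_N}) : Prop :=
  forall y : Welt N,
    (exists2 v, v \in Wbar_beta N beta & y = wmul (wmul (emb u) x) (emb v)) <->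
    (exists2 v, v \in Wbar_beta N beta & y = wmul x (emb v)).

Definition Wbar_betax (N : nat) (beta : seq nat) (x : Welt N) : {set {perm 'I_N}} :=
  <<[set s : {perm 'I_N} | [exists i : 'I_N, exists j : 'I_N,
      [&& (j == i.+1 :> nat),
        [exists a : 'I_N, exists b : 'I_N,
           [&& (a < b)%N, blk beta a == blk beta b
             & ract x (a, b, 0) == (i, j, 0)]]
        & s == tperm i j]]]>>%g.

(* Main.v *)
Require Import Defs.
From mathcomp Require Import all_boot all_order all_algebra all_fingroup.
From mathcomp Require Import finmap boolp classical_sets cardinality.
From mathcomp Require Import zify.
Set Implicit Arguments. Unset Strict Implicit. Unset Printing Implicit Defensive.
Import GRing.Theory Num.Theory.

Lemma card_imfset_set (T : finType) (K : choiceType) (f : T -> K) (A : {set T}) :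
  injective f -> #|` [fset f p | p in A]%fset| = #|A|.
Proof.
move=> fi. rewrite card_imfset //= cardE. apply: perm_size. apply: uniq_perm.
all: try exact: enum_finmem_uniq. all: try exact: enum_uniq. by [].
Qed.

Definition invs N (z : {perm 'I_N}) : {set 'I_N * 'I_N} :=
  [set p : 'I_N * 'I_N | (p.1 < p.2)%N && (z p.2 < z p.1)%N].

Local Open Scope classical_set_scope.
Lemma len_emb N (z : {perm 'I_N}) : len (emb z) = #|invs z|.
Proof.
rewrite /len.
have -> : inv_set (emb z) = [set` [fset ((p.1, p.2, 0%R) : aroot N) | p in invs z]%fset].
  apply/seteqP; split => r /=.
  - case: r => [[a b] k]; rewrite /inv_set /is_root /rpos /ract /emb /= !ffunE subrr subr0.
    move=> [Hab [Hp Hn]].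
    have Hzab : z a != z b by rewrite (inj_eq perm_inj).
    have [H1 H2 Hk] : [/\ (a < b)%N, (z b < z a)%N & k = 0%R].
      move: Hp Hn Hzab Hab; rewrite -!(inj_eq val_inj) /= => Hp Hn Hzab Hab.
      split; lia.
    apply/imfsetP; exists (a, b); first by rewrite /= inE /= H1 H2.
    by rewrite Hk.
  - move/imfsetP => [[a b]]; rewrite inE /= => /andP [H1 H2] ->.
    rewrite /inv_set /is_root /rpos /ract /emb /= !ffunE subrr ?subr0 /=.
    split; first by rewrite -(inj_eq val_inj) /=; lia.
    split; lia.
rewrite set_fsetK card_imfset_set //.
by move=> [a b] [c d] [-> ->].
Qed.

Local Close Scope classical_set_scope.
Lemma blk_mono beta (i j : nat) : (i <= j)%N -> (blk beta i <= blk beta j)%N.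
Proof. move=> Hij; apply: sub_count => p /= Hp; exact: leq_trans Hp Hij. Qed.

Lemma Wbeta_blk N beta (v : {perm 'I_N}) : v \in Wbar_beta N beta ->
  forall k, blk beta (v k) = blk beta k.
Proof.
pose H := [set v : {perm 'I_N} | [forall k, blk beta (v k) == blk beta k]].
have gH : group_set H.
  apply/group_setP; split; first by rewrite inE; apply/forallP => k; rewrite perm1.
  move=> a b; rewrite !inE => /forallP Ha /forallP Hb; apply/forallP => k.
  by rewrite permM (eqP (Hb _)) (eqP (Ha _)).
have : Wbar_beta N beta \subset Group gH.
  rewrite /Wbar_beta gen_subG; apply/fintype.subsetP => s; rewrite inE.
  move=> /existsP [i /existsP [j /and3P [_ /eqP Hij /eqP ->]]].
  rewrite inE; apply/forallP => k; case: tpermP => [->|->|]; by rewrite ?Hij.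
by move/fintype.subsetP => Hs /Hs; rewrite inE => /forallP Hk k; apply/eqP.
Qed.

Lemma gen_Wb N beta (i j : 'I_N) : j = i.+1 :> nat -> blk beta i = blk beta j ->
  tperm i j \in Wbar_beta N beta.
Proof.
move=> Hij Hb; apply: mem_gen; rewrite inE; apply/existsP; exists i; apply/existsP; exists j.
by rewrite Hb Hij !eqxx.
Qed.

Lemma tperm_in_Wb N beta (a b : 'I_N) : (a < b)%N -> blk beta a = blk beta b ->
  tperm a b \in Wbar_beta N beta.
Proof.
move=> Hab.
suff: forall d (b : 'I_N), b = a + d.+1 :> nat -> blk beta a = blk beta b ->
   tperm a b \in Wbar_beta N beta.
  by move/(_ (b - a.+1)%N b); apply; lia.
clear Hab b; elim=> [|d IH] b Hb Hbl; first by apply: gen_Wb => //; lia.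
have Hc' : (a + d.+1 < N)%N by have := ltn_ord b; lia.
pose c := Ordinal Hc'.
have Hc : blk beta a = blk beta c.
  apply/anti_leq/andP; split; first by apply: blk_mono => /=; lia.
  rewrite Hbl; apply: blk_mono => /=; lia.
have -> : tperm a b = (tperm a c ^ tperm c b)%g.
  rewrite tpermJ tpermL tpermD //; rewrite -(inj_eq val_inj) /=; lia.
rewrite groupJ //; first by apply: IH.
by apply: gen_Wb => /=; [lia | rewrite -Hc].
Qed.

Lemma tperm_val N (c d z : 'I_N) : val (tperm c d z) =
  (if val z == val c then val d else if val z == val d then val c else val z).
Proof.
case: tpermP => [->|->|Hc Hd]; rewrite ?eqxx //.
- by case: eqP => // /val_inj ->.
- have Hc' : val z != val c by apply/eqP => /val_inj.
  have Hd' : val z != val d by apply/eqP => /val_inj.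
  by rewrite (negbTE Hc') (negbTE Hd').
Qed.

Lemma tperm_lt N (c d p q : 'I_N) : d = c.+1 :> nat -> (p < q)%N ->
  ~~ ((p == c) && (q == d)) -> (tperm c d p < tperm c d q)%N.
Proof.
move=> Hcd Hpq; rewrite -!(inj_eq val_inj) !tperm_val /=.
do !case: ifP => ?; lia.
Qed.

Lemma up_adj N beta (w : {perm 'I_N}) : in_Wbar_up beta w ->
  forall c d : 'I_N, d = c.+1 :> nat -> blk beta c = blk beta d -> (w c < w d)%N.
Proof.
move=> Hup c d Hcd Hb.
have Hne : ((w d : nat) != w c).
  by apply/eqP => /val_inj/perm_inj E; move: Hcd; rewrite E; lia.
rewrite ltnNge; apply/negP => Hle.
have Hlt : (w d < w c)%N by lia.
set t := tperm c d.
have Hle' := Hup t (gen_Wb Hcd Hb); rewrite !len_emb in Hle'.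
pose f := fun p : 'I_N * 'I_N => (t p.1, t p.2).
have finj : injective f by move=> [a b] [a' b'] [/perm_inj -> /perm_inj ->].
have : f @: invs (t * w)%g \proper invs w.
  apply/properP; split.
  - apply/fintype.subsetP => _ /imsetP [[p q] Hpq ->]; move: Hpq.
    rewrite !inE /= !permM => /andP [H1 H2].
    rewrite H2 andbT; apply: tperm_lt => //.
    apply/negP => /andP [/eqP Ep /eqP Eq]; subst p q.
    by move: H2; rewrite /t tpermL tpermR; lia.
  - exists (c, d); first by rewrite inE /=; apply/andP; split; lia.
    apply/negP => /imsetP [[p q] Hpq [Ep Eq]].
    have Ep' : p = d by rewrite -(tpermK c d p) -Ep tpermL.
    have Eq' : q = c by rewrite -(tpermK c d q) -Eq tpermR.
    by move: Hpq; rewrite inE /= Ep' Eq'; lia.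
move/proper_card; rewrite card_imset // ltnNge; move/negP; apply; exact: Hle'.
Qed.

Lemma up_inc N beta (w : {perm 'I_N}) : in_Wbar_up beta w ->
  forall a b : 'I_N, (a < b)%N -> blk beta a = blk beta b -> (w a < w b)%N.
Proof.
move=> Hup a b Hab.
suff: forall d (b : 'I_N), b = a + d.+1 :> nat -> blk beta a = blk beta b -> (w a < w b)%N.
  by move/(_ (b - a.+1)%N b); apply; lia.
clear Hab b; elim=> [|d IH] b Hb Hbl; first by apply: (up_adj Hup) => //; lia.
have Hc' : (a + d.+1 < N)%N by have := ltn_ord b; lia.
pose c := Ordinal Hc'.
have Hc : blk beta a = blk beta c.
  apply/anti_leq/andP; split; first by apply: blk_mono => /=; lia.
  rewrite Hbl; apply: blk_mono => /=; lia.
apply: (@ltn_trans (w c)); first by apply: IH.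
apply: (up_adj Hup) => /=; [lia | by rewrite -Hc].
Qed.

Definition msr N (u : {perm 'I_N}) : nat := (\sum_(m : 'I_N) (u^-1%g m : nat) * m)%N.

Lemma msr_bound N (u : {perm 'I_N}) : (msr u <= N * N * N)%N.
Proof.
have H : forall m : 'I_N, true -> ((u^-1%g m : nat) * m <= N * N)%N.
  by move=> m _; apply: leq_mul; apply: ltnW.
rewrite /msr; apply: (leq_trans (leq_sum _ H)); rewrite sum_nat_const card_ord; lia.
Qed.

Lemma msr_lt N (u : {perm 'I_N}) (i j : 'I_N) : j = i.+1 :> nat ->
  (u^-1%g j < u^-1%g i)%N -> (msr u < msr (u * tperm i j)%g)%N.
Proof.
move=> Hij Hlt.
have Hne : j != i by apply/eqP => E; move: Hij; rewrite E; lia.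
have E1 : msr u = ((u^-1%g i : nat) * i + (u^-1%g j : nat) * j +
   \sum_(m | (m != i) && (m != j)) (u^-1%g m : nat) * m)%N.
  by rewrite /msr (bigD1 i) //= (bigD1 j) //= addnA.
have E2 : msr (u * tperm i j)%g = ((u^-1%g j : nat) * i + (u^-1%g i : nat) * j +
   \sum_(m | (m != i) && (m != j)) (u^-1%g m : nat) * m)%N.
  rewrite /msr (bigD1 i) //= (bigD1 j) //= addnA invMg tpermV !permM tpermL tpermR.
  congr (_ + _)%N; apply: eq_bigr => m /andP [H1 H2]; rewrite permM tpermD //.
    by rewrite eq_sym.
  by rewrite eq_sym.
rewrite E1 E2; nia.
Qed.

Lemma descent N (f : {perm 'I_N}) : f != 1%g ->
  exists i j : 'I_N, j = i.+1 :> nat /\ (f j < f i)%N.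
Proof.
move=> Hf.
case: (boolP [exists i : 'I_N, exists j : 'I_N, (j == i.+1 :> nat) && (f j < f i)%N]).
  by move=> /existsP [i /existsP [j /andP [/eqP H1 H2]]]; exists i, j.
move=> Hn.
have Hinc : forall i j : 'I_N, j = i.+1 :> nat -> (f i < f j)%N.
  move=> i j Hij.
  have : ~~ ((j == i.+1 :> nat) && (f j < f i)%N).
    by move: Hn; rewrite negb_exists => /forallP /(_ i); rewrite negb_exists => /forallP /(_ j).
  rewrite Hij eqxx /= -leqNgt leq_eqVlt => /orP [/eqP E|//].
  have : i = j by apply: (@perm_inj _ f); apply: val_inj.
  by move=> E'; move: Hij; rewrite E'; lia.
have up : forall m (k : 'I_N), k = m :> nat -> (k <= f k)%N.
  elim=> [|m IH] k Hk; first by rewrite Hk.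
  have Hm : (m < N)%N by have := ltn_ord k; lia.
  have := IH (Ordinal Hm) erefl; have := Hinc (Ordinal Hm) k Hk => /=; lia.
have down : forall d (k : 'I_N), (k + d = N.-1)%N -> (f k <= k)%N.
  elim=> [|d IH] k Hk; first by have := ltn_ord (f k); lia.
  have Hm : (k.+1 < N)%N by have := ltn_ord k; lia.
  have := IH (Ordinal Hm) (etrans (addSnnS _ _) Hk) => /=.
  have := Hinc k (Ordinal Hm) erefl => /=; lia.
exfalso; move/eqP: Hf; apply; apply/permP => k; rewrite perm1; apply: val_inj; apply/eqP.
rewrite eqn_leq (up k k erefl) (down (N.-1 - k)%N k) //.
have := ltn_ord k; lia.
Qed.

Lemma gen_adj N (X : {set {perm 'I_N}}) (S : pred 'I_N) :
  (forall i j : 'I_N, j = i.+1 :> nat -> S i -> tperm i j \in <<X>>%g) ->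
  forall u : {perm 'I_N},
  (forall k i : 'I_N, (minn k (u k) <= i < maxn k (u k))%N -> S i) ->
  u \in <<X>>%g.
Proof.
move=> HX u.
move: {2}(N * N * N - msr u)%N (leqnn (N * N * N - msr u)%N) => m.
elim: m u => [|m IH] u Hm HC.
all: have [->|Hu] := eqVneq u 1%g; first exact: group1.
all: have Hu' : u^-1%g != 1%g by apply: contra Hu => /eqP H; apply/eqP; rewrite -[u]invgK H invg1.
all: have [i [j [Hij Hd]]] := descent Hu'.
all: have Hlt := msr_lt Hij Hd; have Hb := msr_bound (u * tperm i j)%g.
  by lia.
have HSi : S i.
  have H1 := HC (u^-1%g i) i; have H2 := HC (u^-1%g j) i.
  rewrite !permKV in H1 H2.
  case: (leqP j (u^-1%g i)) => Hc.
    by apply: H1; lia.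
  by apply: H2; lia.
have -> : u = (u * tperm i j * tperm i j)%g by rewrite -mulgA tperm2 mulg1.
rewrite groupM //; last by apply: HX.
apply: IH; first by lia.
move=> k i' Hk; rewrite permM in Hk.
case: (eqVneq i' i) => [->//|Hi'].
apply: (HC k i'); move: Hk Hi'; rewrite tperm_val -(inj_eq val_inj) /=.
by do !case: ifP => ?; lia.
Qed.

Lemma in_Wx_iff N beta (x : Welt N) (u : {perm 'I_N}) :
  in_Wx beta x u <-> (forall j, x.1 (u^-1%g j) = x.1 j) /\
                     (x.2 * u * x.2^-1)%g \in Wbar_beta N beta.
Proof.
case: x => mu w /=; split.
- move=> H.
  have [_ /(_ (ex_intro2 _ _ 1%g (group1 _) erefl))] := H (wmul (mu, w) (emb 1%g)).
  move=> [v Hv E]; rewrite /wmul /emb /= in E; case: E => E1 E2.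
  split.
  + move=> j; move/ffunP: E1 => /(_ j); rewrite !ffunE /= !addr0 add0r.
    by move=> ->.
  + rewrite mul1g in E2.
    have -> : (w * u * w^-1 = v^-1)%g.
      apply: (@mulIg _ w); rewrite mulgKV.
      by rewrite -[(w * u)%g](mulKg v) -E2.
    by rewrite groupV.
- move=> [Hfix Hc] y; split.
  + move=> [v Hv ->]; exists (v * (w * u * w^-1))%g; first by rewrite groupM.
    rewrite /wmul /emb /=; congr pair.
      by apply/ffunP => j; rewrite !ffunE /= Hfix !addr0 add0r.
    by rewrite -mulgA mulgKV.
  + move=> [v Hv ->]; exists (v * (w * u * w^-1)^-1)%g; first by rewrite groupM ?groupV.
    rewrite /wmul /emb /=; congr pair.
      by apply/ffunP => j; rewrite !ffunE /= Hfix !addr0 add0r.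
    by rewrite -mulgA invMg invgK mulgKV.
Qed.

Local Open Scope ring_scope.

Theorem proposition2p17 (N : nat) (hN : (2 <= N)%N) (beta : seq nat)
  (hbeta : ordered_partition beta N) (x : Welt N) (hx : in_X beta x) :
  forall u : {perm 'I_N}, in_Wx beta x u <-> u \in Wbar_betax beta x.
Proof.
case: hx => w [Hup [eta [Heta Ex]]].
have Hw : x.2 = w by rewrite Ex.
set mu := x.1.
have Hmu : forall j, mu j = eta j + eta_w beta w j by move=> j; rewrite /mu Ex ffunE.
have ew_mono : forall p q : 'I_N, (p <= q)%N -> eta_w beta w p <= eta_w beta w q.
  move=> p q Hpq; rewrite /eta_w !ffunE lez_nat; apply: subset_leq_card.
  apply/fintype.subsetP => i; rewrite !inE => /andP [H1 H2]; rewrite H2 andbT; lia.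
have mu_mono : forall p q : 'I_N, (p <= q)%N -> mu p <= mu q.
  move=> p q Hpq; rewrite !Hmu; apply: lerD; last exact: ew_mono.
  case: (ltnP p q) => Hlt; first exact: Heta.
  by have -> : p = q by apply: ord_inj; apply/eqP; rewrite eqn_leq Hpq Hlt.
have mu_step : forall p q : 'I_N, q = p.+1 :> nat -> eta_cond beta w p -> mu p < mu q.
  move=> p q Hpq Hc; rewrite !Hmu.
  have : (#|[set i : 'I_N | (i < p)%N & eta_cond beta w i]| <
          #|[set i : 'I_N | (i < q)%N & eta_cond beta w i]|)%N.
    apply: proper_card; apply/properP; split.
      apply/fintype.subsetP => i; rewrite !inE => /andP [H1 H2]; rewrite H2 andbT; lia.
    by exists p; rewrite !inE ?ltnn //= Hc andbT; lia.
  have : eta p <= eta q by apply: Heta; lia.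
  rewrite /eta_w !ffunE => H1 H2.
  have H2' : ((#|[set i : 'I_N | (i < p)%N & eta_cond beta w i]|)%:Z + 1 <=
          (#|[set i : 'I_N | (i < q)%N & eta_cond beta w i]|)%:Z).
    by rewrite -[1]/(1%:Z) -PoszD lez_nat addn1.
  lia.
pose B := fun p : 'I_N => blk beta (w^-1%g p).
have B_step : forall p q : 'I_N, q = p.+1 :> nat -> mu p = mu q -> (B q <= B p)%N.
  move=> p q Hpq Hm; rewrite /B.
  case: (ltngtP (w^-1%g q) (w^-1%g p)) => Hab.
  - by apply: blk_mono; apply: ltnW.
  - apply: eq_leq; apply/eqP; apply/negPn/negP => Hne.
    have : eta_cond beta w p.
      apply/existsP; exists (w^-1%g p); apply/existsP; exists (w^-1%g q).
      by rewrite Hab eq_sym Hne !permKV eqxx Hpq eqxx.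
    by move/(mu_step p q Hpq); rewrite Hm; lia.
  - have : q = p by apply: (@perm_inj _ (w^-1%g)); apply: ord_inj.
    by move=> E; move: Hpq; rewrite E; lia.
have chain : forall lo hi : 'I_N, mu lo = mu hi -> forall d (p q : 'I_N),
    (lo <= p)%N -> q = (p + d)%N :> nat -> (q <= hi)%N -> (B q <= B p)%N.
  move=> lo hi Hlh; elim=> [|d IH] p q H1 H2 H3.
    by have -> : q = p by apply: ord_inj; rewrite H2 addn0.
  have Hr : (p + d < N)%N by have := ltn_ord q; lia.
  pose r := Ordinal Hr.
  apply: (@leq_trans (B r)); last by apply: IH => //=; lia.
  apply: B_step => /=; first lia.
  have h1 := mu_mono lo r ltac:(rewrite /=; lia).
  have h2 := mu_mono r q ltac:(rewrite /=; lia).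
  have h3 := mu_mono q hi H3.
  lia.
have interval : forall lo hi : 'I_N, (lo <= hi)%N -> mu lo = mu hi -> B lo = B hi ->
    forall i j : 'I_N, j = i.+1 :> nat -> (lo <= i < hi)%N -> mu i = mu j /\ B i = B j.
  move=> lo hi Hlh Hm Hb i j Hij /andP [Hi1 Hi2].
  have Hmij : mu i = mu j.
    have h1 := mu_mono lo i Hi1.
    have h2 := mu_mono i j ltac:(lia).
    have h3 := mu_mono j hi ltac:(lia).
    lia.
  split => //.
  have c1 := chain lo hi Hm (i - lo)%N lo i (leqnn _) ltac:(lia) ltac:(lia).
  have c2 := chain lo hi Hm (hi - j)%N j hi ltac:(lia) ltac:(lia) (leqnn _).
  have c3 := B_step i j Hij Hmij.
  apply/anti_leq/andP; split => //; lia.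
move=> u; rewrite in_Wx_iff; split.
- move=> [Hfix Hc].
  rewrite Hw in Hc.
  have HB := Wbeta_blk Hc.
  pose S := fun i : 'I_N => [exists j : 'I_N, [&& (j == i.+1 :> nat), mu i == mu j & B i == B j]].
  apply: (@gen_adj _ _ S).
    move=> i j Hij /existsP [j' /and3P [/eqP Hj' /eqP Hm /eqP Hb]].
    have Ej : j' = j by apply: ord_inj; rewrite /= Hj' Hij.
    subst j'.
    apply: mem_gen; rewrite inE; apply/existsP; exists i; apply/existsP; exists j.
    rewrite Hij eqxx eqxx andbT /=.
    apply/existsP; exists (w^-1%g i); apply/existsP; exists (w^-1%g j).
    have Hab : (w^-1%g i < w^-1%g j)%N.
      case: (ltngtP (w^-1%g i) (w^-1%g j)) => // Hab.
        have := up_inc Hup Hab (esym Hb); rewrite !permKV; lia.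
      have : i = j by apply: (@perm_inj _ (w^-1%g)); apply: ord_inj.
      by move=> E; move: Hij; rewrite E; lia.
    rewrite Hab /=; apply/andP; split; first by apply/eqP.
    by rewrite /Defs.ract /= Hw !permKV; apply/eqP; congr (_, _, _); move: Hm; rewrite /mu; lia.
  move=> k i Hki.
  have Hmk : mu (u k) = mu k by rewrite -{2}(permK u k) Hfix.
  have Hbk : B (u k) = B k.
    by have := HB (w^-1%g k); rewrite !permM permKV.
  have [lo [hi [Hlh [Hm [Hb Hin]]]]] : exists lo hi : 'I_N, [/\ (lo <= hi)%N, mu lo = mu hi,
       B lo = B hi & (lo <= i < hi)%N].
    case: (leqP k (u k)) => Hk.
      by exists k, (u k); split => //; move: Hki; lia.
    by exists (u k), k; split => //; [lia | move: Hki; lia].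
  have Hi : (i.+1 < N)%N by have := ltn_ord hi; lia.
  have [h1 h2] := interval lo hi Hlh Hm Hb i (Ordinal Hi) erefl Hin.
  by apply/existsP; exists (Ordinal Hi); rewrite /= eqxx h1 h2 !eqxx.
- pose H := [set v : {perm 'I_N} | [forall j, mu (v^-1%g j) == mu j] &&
                                   ((x.2 * v * x.2^-1)%g \in Wbar_beta N beta)].
  have gH : group_set H.
    apply/group_setP; split.
      rewrite inE mulg1 mulgV group1 andbT; apply/forallP => j; by rewrite invg1 perm1.
    move=> a b; rewrite !inE => /andP [/forallP Ha Ha'] /andP [/forallP Hb Hb'].
    apply/andP; split.
      by apply/forallP => j; rewrite invMg permM (eqP (Ha _)) (eqP (Hb _)).
    have -> : (x.2 * (a * b) * x.2^-1 = (x.2 * a * x.2^-1) * (x.2 * b * x.2^-1))%g.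
      by rewrite !mulgA mulgKV.
    by rewrite groupM.
  have : Wbar_betax beta x \subset Group gH.
    rewrite /Wbar_betax gen_subG; apply/fintype.subsetP => s; rewrite inE.
    move=> /existsP [i /existsP [j /and3P [/eqP Hij /existsP [a /existsP [b Hab]] /eqP ->]]].
    move: Hab => /and3P [Hab /eqP Hbl /eqP E].
    move: E; rewrite /Defs.ract => -[Ea Eb Ek].
    have Hm : mu i = mu j by move: Ek; rewrite -/mu Ea Eb; lia.
    rewrite inE; apply/andP; split.
      apply/forallP => k; rewrite tpermV; case: tpermP => [->|->|//]; by rewrite Hm.
    have -> : (x.2 * tperm i j * x.2^-1 = tperm i j ^ x.2^-1)%g by rewrite conjgE invgK mulgA.
    rewrite tpermJ -Ea -Eb !permK.
    exact: tperm_in_Wb.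
  move/fintype.subsetP => Hs /Hs; rewrite inE => /andP [/forallP Hf Hc].
  by split => // j; apply/eqP.
Qed.
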